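(* Let $\Gamma\rightrightarrows M$ be a Lie groupoid, $E$ a differentiable vector bundle over $M$ with a smooth metric $\phi$, and $\lambda$ a unital continuous pseudo-representation of $\Gamma$ on $E$ with $c(\lambda)<1$. Then for all $g\in\Gamma$, $\|\lambda(g)^{-1}\|\le\dfrac{b(\lambda)}{1-c(\lambda)}$, and for all $g,h$ with $sg=sh$, $\|\Delta^\lambda(g,h)\|\le c(\lambda)\dfrac{b(\lambda)}{1-c(\lambda)}$, with the convention $0\cdot\infty=0$.
   Context: A pseudo-representation is a family of linear maps $\lambda_g:E_{sg}\to E_{tg}$ forming a section of $L(s^*E,t^*E)$; unital means $\lambda_{1_x}=\mathrm{id}$. (Under the hypotheses each $\lambda_g$ is invertible.) Operator norms $\|\cdot\|$ on $L(E_x,E_y)$ are induced by $\phi$. $b(\lambda):=\sup_{g\in\Gamma}\|\lambda(g)\|$ and $c(\lambda):=\sup\{\|\lambda(g'g)-\lambda(g')\lambda(g)\|:sg'=tg\}$ (possibly infinite). $\Delta^\lambda(g,h):=\lambda_g\lambda_h^{-1}-\lambda_{gh^{-1}}:E_{th}\to E_{tg}$. *)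

(* Defs.v *)
From Stdlib Require Import Reals List.
Open Scope R_scope.

(* Finite-dimensional real inner-product spaces (the fibres E_x of a
   vector bundle equipped with a metric phi).                          *)
Record InnerSpace := {
  ips_car :> Type;
  ips_zero : ips_car;
  ips_add : ips_car -> ips_car -> ips_car;
  ips_opp : ips_car -> ips_car;
  ips_scal : R -> ips_car -> ips_car;
  ips_ip : ips_car -> ips_car -> R;
  ips_addA : forall u v w, ips_add u (ips_add v w) = ips_add (ips_add u v) w;
  ips_addC : forall u v, ips_add u v = ips_add v u;
  ips_add0 : forall u, ips_add u ips_zero = u;
  ips_addN : forall u, ips_add u (ips_opp u) = ips_zero;
  ips_scalA : forall a b u, ips_scal a (ips_scal b u) = ips_scal (a * b) u;
  ips_scal1 : forall u, ips_scal 1 u = u;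
  ips_scalDr : forall a u v, ips_scal a (ips_add u v) = ips_add (ips_scal a u) (ips_scal a v);
  ips_scalDl : forall a b u, ips_scal (a + b) u = ips_add (ips_scal a u) (ips_scal b u);
  ips_ipC : forall u v, ips_ip u v = ips_ip v u;
  ips_ipD : forall u v w, ips_ip (ips_add u v) w = ips_ip u w + ips_ip v w;
  ips_ipZ : forall a u v, ips_ip (ips_scal a u) v = a * ips_ip u v;
  ips_ip_ge0 : forall u, 0 <= ips_ip u u;
  ips_ip_eq0 : forall u, ips_ip u u = 0 -> u = ips_zero;
  ips_findim : exists basis : list ips_car, forall v, exists cs : list R,
      length cs = length basis /\
      v = fold_right (fun p acc => ips_add (ips_scal (fst p) (snd p)) acc)
                     ips_zero (combine cs basis)
}.

Arguments ips_zero {i}.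
Arguments ips_add {i}.
Arguments ips_opp {i}.
Arguments ips_scal {i}.
Arguments ips_ip {i}.

Definition vnorm {X : InnerSpace} (v : X) : R := sqrt (ips_ip v v).
Definition vsub {X : InnerSpace} (u v : X) : X := ips_add u (ips_opp v).

Definition is_linear {X Y : InnerSpace} (f : X -> Y) : Prop :=
  (forall u v, f (ips_add u v) = ips_add (f u) (f v)) /\
  (forall a u, f (ips_scal a u) = ips_scal a (f u)).

Definition is_opnorm {X Y : InnerSpace} (f : X -> Y) (r : R) : Prop :=
  is_lub (fun a => exists v : X, vnorm v <= 1 /\ a = vnorm (f v)) r.

Definition is_inverse {X Y : InnerSpace} (f : X -> Y) (L : Y -> X) : Prop :=
  (forall v, L (f v) = v) /\ (forall w, f (L w) = w).

(* Groupoids, presented by their hom-types: g : Hom x y means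
   s g = x and t g = y; gcomp g' g is the product g'g (s g' = t g). *)
Record Groupoid (M : Type) := {
  Hom : M -> M -> Type;
  gcomp : forall x y z, Hom y z -> Hom x y -> Hom x z;
  gid : forall x, Hom x x;
  ginv : forall x y, Hom x y -> Hom y x;
  gcompA : forall x y z w (h : Hom z w) (g : Hom y z) (f : Hom x y),
      gcomp x z w h (gcomp x y z g f) = gcomp x y w (gcomp y z w h g) f;
  gcomp1l : forall x y (g : Hom x y), gcomp x y y (gid y) g = g;
  gcomp1r : forall x y (g : Hom x y), gcomp x x y g (gid x) = g;
  gcompVl : forall x y (g : Hom x y), gcomp x y x (ginv x y g) g = gid x;
  gcompVr : forall x y (g : Hom x y), gcomp y x y g (ginv x y g) = gid y
}.

Arguments Hom {M} _ x y.
Arguments gcomp {M g x y z} : rename.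
Arguments gid {M g} : rename.
Arguments ginv {M g x y} : rename.

(* Extended nonnegative reals, for b(lambda), c(lambda) (possibly infinite) *)
Inductive ereal := EFin (r : R) | EPInf.

Definition ele (a b : ereal) : Prop :=
  match a, b with
  | _, EPInf => True
  | EPInf, EFin _ => False
  | EFin x, EFin y => x <= y
  end.

Definition emul (a b : ereal) : ereal :=
  match a, b with
  | EFin x, EFin y => EFin (x * y)
  | EFin x, EPInf | EPInf, EFin x => if Req_EM_T x 0 then EFin 0 else EPInf
  | EPInf, EPInf => EPInf
  end.

Definition ediv (a : ereal) (d : R) : ereal :=
  match a with EFin x => EFin (x / d) | EPInf => EPInf end.

Definition is_esup (S : R -> Prop) (e : ereal) : Prop :=
  match e with
  | EFin r => is_lub S r
  | EPInf => (exists a, S a) /\ ~ bound S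
  end.

Section PR.
Context {M : Type} {G : Groupoid M} (E : M -> InnerSpace)
        (lam : forall x y : M, Hom G x y -> E x -> E y).

Definition b_set : R -> Prop :=
  fun a => exists (x y : M) (g : Hom G x y), is_opnorm (lam x y g) a.

Definition c_set : R -> Prop :=
  fun a => exists (x y z : M) (g : Hom G x y) (g' : Hom G y z),
    is_opnorm (fun v => vsub (lam x z (gcomp g' g) v) (lam y z g' (lam x y g v))) a.

(* Delta(g,h) = lam_g lam_h^{-1} - lam_{g h^{-1}} : E_{th} -> E_{tg},
   where Lh is the inverse of lam_h *)
Definition DeltaL {x y z : M} (g : Hom G x y) (h : Hom G x z) (Lh : E z -> E x)
  : E z -> E y :=
  fun v => vsub (lam x y g (Lh v)) (lam z y (gcomp g (ginv h)) v).

End PR.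

(* Main.v *)
Require Import Defs.
From Stdlib Require Import Reals List Lia Lra.
From mathcomp Require all_boot all_algebra Rstruct.
From Corelib Require Import ssreflect.
From Stdlib Require Import Classical ClassicalEpsilon.
Open Scope R_scope.

Fixpoint sumR (n : nat) (F : nat -> R) : R :=
  match n with O => 0 | S m => sumR m F + F m end.

Module LAM.
Import all_boot all_algebra Rstruct.
Section LA.
Import GRing.Theory.
Local Open Scope ring_scope.

Lemma big_sumR n (F : nat -> R) : (\sum_(j < n) F (nat_of_ord j)) = sumR n F.
Proof.
rewrite -(big_mkord xpredT F).
elim: n => [|n IH]; first by rewrite big_geq.
rewrite big_nat_recr //= IH //.
Qed.

Lemma linsys (n : nat) (a : nat -> nat -> R) :
  (forall x : nat -> R, (forall i, (i < n)%coq_nat -> sumR n (fun j => Rmult (a i j) (x j)) = 0%R) ->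
     forall j, (j < n)%coq_nat -> x j = 0%R) ->
  forall c : nat -> R, exists x : nat -> R,
    forall i, (i < n)%coq_nat -> sumR n (fun j => Rmult (a i j) (x j)) = c i.
Proof.
case: n a => [|m] a Hinj c.
  by exists (fun _ => 0%R) => i /ltP.
pose A : 'M[R]_(m.+1) := \matrix_(i, j) a (nat_of_ord i) (nat_of_ord j).
have HA : A \in unitmx.
  rewrite -unitmx_tr -row_free_unit -kermx_eq0.
  apply/rowV0P => v /sub_kermxP Hv.
  apply/matrixP => i0 j; rewrite ord1 mxE.
  have := Hinj (fun k => v 0 (inord k)) _ j (ltP (ltn_ord j)).
  rewrite inord_val; apply.
  move=> i /ltP Hi.
  have H := congr1 (fun M : 'M[R]_(1, m.+1) => M 0 (inord i)) Hv.
  rewrite /= !mxE in H.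
  rewrite -big_sumR; rewrite -[RHS]H.
  apply: eq_bigr => k _; rewrite !mxE inord_val inordK // mulrC //.
pose C : 'cV[R]_(m.+1) := \col_i c (nat_of_ord i).
exists (fun k => (invmx A *m C) (inord k) 0) => i /ltP Hi.
have := congr1 (fun M : 'M[R]_(m.+1, 1) => M (inord i) 0) (mulKVmx HA C).
rewrite !mxE inordK // => <-.
rewrite -big_sumR; apply: eq_bigr => k _; rewrite !mxE inord_val inordK //.
Qed.
End LA.
End LAM.
Import LAM.

Open Scope R_scope.
Section Vec.
Variable X : InnerSpace.
Implicit Types u v w : X.

Lemma add0l u : ips_add ips_zero u = u.
Proof. now rewrite ips_addC ips_add0. Qed.

Lemma add_cancel u v w : ips_add u v = ips_add u w -> v = w.
Proof.
intros H.
rewrite -(add0l v) -(add0l w) -(ips_addN _ u) (ips_addC _ u (ips_opp u)).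
now rewrite -!ips_addA H.
Qed.

Lemma scal0 u : ips_scal 0 u = ips_zero.
Proof.
apply (add_cancel (ips_scal 0 u)).
rewrite -ips_scalDl ips_add0. f_equal. ring.
Qed.

Lemma scal_zero a : ips_scal a (@ips_zero X) = ips_zero.
Proof. now rewrite -(scal0 ips_zero) ips_scalA Rmult_0_r. Qed.

Lemma opp_scal u : ips_opp u = ips_scal (-1) u.
Proof.
apply (add_cancel u). rewrite ips_addN.
rewrite -{1}(ips_scal1 _ u) -ips_scalDl.
assert (E : 1 + -1 = 0) by ring. now rewrite E scal0.
Qed.

Lemma vsub_eq0 u v : vsub u v = ips_zero -> u = v.
Proof.
unfold vsub; intros H.
rewrite -(ips_add0 _ u) -(ips_addN _ v) (ips_addC _ v) ips_addA H add0l. reflexivity.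
Qed.

Lemma add_vsub (p a : X) : ips_add p (vsub a p) = a.
Proof.
unfold vsub. rewrite (ips_addC _ a) ips_addA ips_addN add0l. reflexivity.
Qed.

Lemma vsub_add (p a : X) : vsub (ips_add a p) p = a.
Proof.
unfold vsub. rewrite -ips_addA ips_addN ips_add0. reflexivity.
Qed.

Lemma vsub_self u : vsub u u = ips_zero.
Proof. apply ips_addN. Qed.

Lemma ipDr u v w : ips_ip u (ips_add v w) = ips_ip u v + ips_ip u w.
Proof. now rewrite ips_ipC ips_ipD (ips_ipC _ v) (ips_ipC _ w). Qed.

Lemma ipZr a u v : ips_ip u (ips_scal a v) = a * ips_ip u v.
Proof. now rewrite ips_ipC ips_ipZ (ips_ipC _ v). Qed.

Lemma ip0l w : ips_ip ips_zero w = 0.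
Proof. now rewrite -(scal0 ips_zero) ips_ipZ Rmult_0_l. Qed.

Lemma ip0r w : ips_ip w ips_zero = 0.
Proof. now rewrite ips_ipC ip0l. Qed.

Lemma ip_vsub_l u v w : ips_ip (vsub u v) w = ips_ip u w - ips_ip v w.
Proof. unfold vsub. rewrite ips_ipD opp_scal ips_ipZ. ring. Qed.

Lemma ip_expand u v s :
  ips_ip (ips_add u (ips_scal s v)) (ips_add u (ips_scal s v)) =
  ips_ip u u + 2 * s * ips_ip u v + s * s * ips_ip v v.
Proof.
rewrite ips_ipD !ipDr !ips_ipZ !ipZr (ips_ipC _ v u). ring.
Qed.

Lemma CS u v : ips_ip u v * ips_ip u v <= ips_ip u u * ips_ip v v.
Proof.
destruct (Req_dec (ips_ip v v) 0) as [H|H].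
- apply ips_ip_eq0 in H. subst v. rewrite ip0r ip0l. lra.
- pose proof (ips_ip_ge0 _ v) as Hv.
  assert (Hv' : 0 < ips_ip v v) by lra.
  pose proof (ips_ip_ge0 _ (ips_add u (ips_scal (- (ips_ip u v / ips_ip v v)) v))) as H0.
  rewrite ip_expand in H0.
  set (a := ips_ip u v) in *. set (b := ips_ip v v) in *. set (c := ips_ip u u) in *.
  assert (E : c + 2 * - (a / b) * a + - (a / b) * - (a / b) * b = (c * b - a * a) / b)
    by (field; lra).
  rewrite E in H0.
  assert (0 <= c * b - a * a).
  { apply Rmult_le_reg_r with (/ b). apply Rinv_0_lt_compat; lra.
    rewrite Rmult_0_l. exact H0. }
  lra.
Qed.

Lemma vnorm_ge0 u : 0 <= vnorm u.
Proof. apply sqrt_pos. Qed.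

Lemma vnorm_sq u : vnorm u * vnorm u = ips_ip u u.
Proof. apply sqrt_sqrt, ips_ip_ge0. Qed.

Lemma vnorm_zero : vnorm (@ips_zero X) = 0.
Proof. unfold vnorm. now rewrite ip0l sqrt_0. Qed.

Lemma vnorm_eq0 u : vnorm u = 0 -> u = ips_zero.
Proof.
intros H. apply ips_ip_eq0. rewrite -vnorm_sq H. ring.
Qed.

Lemma CS_abs u v : Rabs (ips_ip u v) <= vnorm u * vnorm v.
Proof.
unfold vnorm. rewrite -sqrt_mult; try apply ips_ip_ge0.
rewrite -sqrt_Rsqr_abs. apply sqrt_le_1_alt. unfold Rsqr. apply CS.
Qed.

Lemma vnorm_scal a u : vnorm (ips_scal a u) = Rabs a * vnorm u.
Proof.
unfold vnorm. rewrite ips_ipZ ipZr -Rmult_assoc -sqrt_Rsqr_abs -sqrt_mult.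
- now unfold Rsqr.
- apply Rle_0_sqr.
- apply ips_ip_ge0.
Qed.

Lemma vnorm_opp u : vnorm (ips_opp u) = vnorm u.
Proof. rewrite opp_scal vnorm_scal Rabs_Ropp Rabs_R1. ring. Qed.

Lemma triangle u v : vnorm (ips_add u v) <= vnorm u + vnorm v.
Proof.
rewrite -(sqrt_Rsqr (vnorm u + vnorm v)).
2: { pose proof (vnorm_ge0 u); pose proof (vnorm_ge0 v); lra. }
unfold vnorm at 1. apply sqrt_le_1_alt.
rewrite ips_ipD !ipDr (ips_ipC _ v u).
pose proof (CS_abs u v) as H. pose proof (Rle_abs (ips_ip u v)).
unfold Rsqr. rewrite -(vnorm_sq u) -(vnorm_sq v). nra.
Qed.

Lemma vsub_le u v : vnorm (vsub u v) <= vnorm u + vnorm v.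
Proof. unfold vsub. rewrite -(vnorm_opp v). apply triangle. Qed.

Lemma rev_tri u v : vnorm u <= vnorm v + vnorm (vsub u v).
Proof. rewrite -{1}(add_vsub v u). apply triangle. Qed.

End Vec.

Fixpoint sumv {X : InnerSpace} (n : nat) (F : nat -> X) : X :=
  match n with O => ips_zero | S m => ips_add (sumv m F) (F m) end.

Definition proj {X : InnerSpace} n (b : nat -> X) (v : X) : X :=
  sumv n (fun i => ips_scal (ips_ip v (b i)) (b i)).

Definition ON {X : InnerSpace} n (b : nat -> X) : Prop :=
  forall i j, (i < n)%nat -> (j < n)%nat ->
    ips_ip (b i) (b j) = if Nat.eqb i j then 1 else 0.

Lemma sumR_ext n F G : (forall i, (i < n)%nat -> F i = G i) -> sumR n F = sumR n G.
Proof.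
induction n as [|n IH]; intros H; simpl; auto.
rewrite IH; [|intros; apply H; lia]. rewrite (H n); [reflexivity|lia].
Qed.

Lemma sumR_zero n F : (forall i, (i < n)%nat -> F i = 0) -> sumR n F = 0.
Proof.
intros H. rewrite (sumR_ext n F (fun _ => 0)); auto.
clear H. induction n; simpl; [reflexivity|]. rewrite IHn; ring.
Qed.

Lemma sumR_delta n (x : nat -> R) j : (j < n)%nat ->
  sumR n (fun i => x i * (if Nat.eqb i j then 1 else 0)) = x j.
Proof.
induction n as [|n IH]; intros Hj; [lia|]. simpl.
destruct (Nat.eq_dec j n) as [->|Hne].
- rewrite Nat.eqb_refl sumR_zero.
  + ring.
  + intros i Hi. replace (Nat.eqb i n) with false by (symmetry; apply Nat.eqb_neq; lia). ring.
- rewrite IH; [|lia]. replace (Nat.eqb n j) with false by (symmetry; apply Nat.eqb_neq; lia). ring.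
Qed.

Lemma sumR_le n F G : (forall i, (i < n)%nat -> F i <= G i) -> sumR n F <= sumR n G.
Proof.
induction n as [|n IH]; intros H; simpl; [lra|].
apply Rplus_le_compat. apply IH; intros; apply H; lia. apply H; lia.
Qed.

Lemma sumR_scal n k F : sumR n (fun i => k * F i) = k * sumR n F.
Proof. induction n; simpl; [ring|]. rewrite IHn; ring. Qed.

Section Sums.
Variable X : InnerSpace.

Lemma sumv_ext n (F G : nat -> X) : (forall i, (i < n)%nat -> F i = G i) -> sumv n F = sumv n G.
Proof.
induction n as [|n IH]; intros H; simpl; auto.
rewrite IH; [|intros; apply H; lia]. rewrite (H n); [reflexivity|lia].
Qed.

Lemma ip_sumv_l n (F : nat -> X) w : ips_ip (sumv n F) w = sumR n (fun i => ips_ip (F i) w).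
Proof. induction n; simpl. apply ip0l. rewrite ips_ipD IHn. reflexivity. Qed.

Lemma norm_sumv n (F : nat -> X) : vnorm (sumv n F) <= sumR n (fun i => vnorm (F i)).
Proof.
induction n; simpl. rewrite vnorm_zero; lra.
eapply Rle_trans. apply triangle. lra.
Qed.

Lemma proj_ip n (b : nat -> X) v j : ON n b -> (j < n)%nat ->
  ips_ip (proj n b v) (b j) = ips_ip v (b j).
Proof.
intros Hon Hj. unfold proj. rewrite ip_sumv_l.
rewrite (sumR_ext n _ (fun i => ips_ip v (b i) * (if Nat.eqb i j then 1 else 0))).
- apply sumR_delta; auto.
- intros i Hi. rewrite ips_ipZ Hon; auto.
Qed.

End Sums.

Lemma lin_zero (X Y : InnerSpace) (f : X -> Y) : is_linear f -> f ips_zero = ips_zero.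
Proof.
intros [_ Hs]. rewrite -(scal0 X ips_zero) Hs scal0. reflexivity.
Qed.

Lemma lin_sumv (X Y : InnerSpace) (f : X -> Y) n F : is_linear f ->
  f (sumv n F) = sumv n (fun i => f (F i)).
Proof.
intros Hl. induction n; simpl. apply lin_zero; auto.
destruct Hl as [Ha _]. rewrite Ha IHn. reflexivity.
Qed.

Lemma lin_vsub (X Y : InnerSpace) (f : X -> Y) u v : is_linear f ->
  f (vsub u v) = vsub (f u) (f v).
Proof.
intros [Ha Hs]. unfold vsub. rewrite Ha !opp_scal Hs. reflexivity.
Qed.

From Stdlib Require Import Classical.

Section GS.
Variable X : InnerSpace.

Lemma add_swap (a b c d : X) : ips_add (ips_add a b) (ips_add c d) = ips_add (ips_add a c) (ips_add b d).
Proof.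
rewrite -!ips_addA. f_equal. rewrite !ips_addA. f_equal. apply ips_addC.
Qed.

Lemma sumv_add n (F G : nat -> X) :
  sumv n (fun i => ips_add (F i) (G i)) = ips_add (sumv n F) (sumv n G).
Proof.
induction n; simpl. now rewrite ips_add0. rewrite IHn. apply add_swap.
Qed.

Lemma sumv_scal n k (F : nat -> X) :
  sumv n (fun i => ips_scal k (F i)) = ips_scal k (sumv n F).
Proof.
induction n; simpl. now rewrite scal_zero. rewrite IHn ips_scalDr. reflexivity.
Qed.

Lemma proj_add n b (u v : X) : proj n b (ips_add u v) = ips_add (proj n b u) (proj n b v).
Proof.
unfold proj. rewrite -sumv_add. apply sumv_ext. intros. rewrite ips_ipD ips_scalDl. reflexivity.
Qed.

Lemma proj_scal n b k (u : X) : proj n b (ips_scal k u) = ips_scal k (proj n b u).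
Proof.
unfold proj. rewrite -sumv_scal. apply sumv_ext. intros. rewrite ips_ipZ ips_scalA. reflexivity.
Qed.

Lemma proj_zero n b : proj n b (@ips_zero X) = ips_zero.
Proof. rewrite -{1}(scal0 X ips_zero) proj_scal scal0. reflexivity. Qed.

Lemma proj_orth n (b : nat -> X) u e : (forall i, (i < n)%nat -> ips_ip (b i) e = 0) ->
  ips_ip (proj n b u) e = 0.
Proof.
intros H. unfold proj. rewrite ip_sumv_l. apply sumR_zero. intros i Hi.
rewrite ips_ipZ H; auto. ring.
Qed.

Lemma GS (l : list X) : exists n b, ON n b /\ forall a, In a l -> proj n b a = a.
Proof.
induction l as [|a l IH].
- exists O, (fun _ => ips_zero). split. intros i j Hi; lia. intros a [].
- destruct IH as [n [b [Hon Hfix]]].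
  set (w := vsub a (proj n b a)).
  destruct (classic (w = ips_zero)) as [Hw|Hw].
  + exists n, b. split; auto. intros x [<-|Hx]; auto.
    symmetry. apply vsub_eq0. exact Hw.
  + set (nw := vnorm w).
    assert (Hnw : 0 < nw).
    { destruct (vnorm_ge0 X w) as [H|H]; auto. exfalso. apply Hw, vnorm_eq0. auto. }
    set (e := ips_scal (/ nw) w).
    assert (Hwb : forall i, (i < n)%nat -> ips_ip w (b i) = 0).
    { intros i Hi. unfold w. rewrite ip_vsub_l proj_ip; auto. ring. }
    assert (Heb : forall i, (i < n)%nat -> ips_ip (b i) e = 0).
    { intros i Hi. unfold e. rewrite ipZr ips_ipC Hwb; auto. ring. }
    assert (Hww : ips_ip w w = nw * nw) by (unfold nw; rewrite vnorm_sq; reflexivity).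
    assert (Hwe : ips_ip w e = nw).
    { unfold e. rewrite ipZr Hww. field. lra. }
    assert (Hee : ips_ip e e = 1).
    { unfold e at 1. rewrite ips_ipZ Hwe. field. lra. }
    set (b' := fun i => if Nat.eqb i n then e else b i).
    assert (Hproj : forall u, proj (S n) b' u = ips_add (proj n b u) (ips_scal (ips_ip u e) e)).
    { intros u. unfold proj. simpl. unfold b' at 3 4. rewrite Nat.eqb_refl. f_equal.
      apply sumv_ext. intros i Hi. unfold b'.
      replace (Nat.eqb i n) with false by (symmetry; apply Nat.eqb_neq; lia). reflexivity. }
    exists (S n), b'. split.
    * intros i j Hi Hj. unfold b'.
      destruct (Nat.eqb_spec i n) as [->|Hin]; destruct (Nat.eqb_spec j n) as [->|Hjn].
      -- rewrite Nat.eqb_refl. exact Hee.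
      -- rewrite ips_ipC Heb; [|lia]. replace (Nat.eqb n j) with false; auto.
         symmetry; apply Nat.eqb_neq; lia.
      -- rewrite Heb; [|lia]. replace (Nat.eqb i n) with false; auto.
         symmetry; apply Nat.eqb_neq; lia.
      -- apply Hon; lia.
    * intros x [<-|Hx]; rewrite Hproj.
      -- assert (Hae : ips_ip a e = nw).
         { rewrite -{1}(add_vsub X (proj n b a) a). fold w.
           rewrite ips_ipD proj_orth; auto. rewrite Hwe. ring. }
         rewrite Hae. unfold e. rewrite ips_scalA.
         replace (nw * / nw) with 1 by (field; lra). rewrite ips_scal1.
         apply add_vsub.
      -- rewrite Hfix; auto.
         assert (Hxe : ips_ip x e = 0).
         { rewrite -(Hfix x Hx). apply proj_orth; auto. }
         rewrite Hxe scal0 ips_add0. reflexivity.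
Qed.

Lemma fold_fixed n b (cs : list R) (bs : list X) :
  (forall a, In a bs -> proj n b a = a) ->
  let v := fold_right (fun p acc => ips_add (ips_scal (fst p) (snd p)) acc)
                     ips_zero (combine cs bs) in proj n b v = v.
Proof.
revert cs. induction bs as [|a bs IH]; intros cs H; simpl.
- destruct cs; simpl; apply proj_zero.
- destruct cs as [|c cs]; simpl. apply proj_zero.
  rewrite proj_add proj_scal H; [|left; auto]. f_equal. apply IH. intros; apply H; right; auto.
Qed.

Lemma basis_exists : exists n (b : nat -> X), ON n b /\ forall v, proj n b v = v.
Proof.
destruct (ips_findim X) as [bs Hbs].
destruct (GS bs) as [n [b [Hon Hfix]]].
exists n, b. split; auto. intros v. destruct (Hbs v) as [cs [_ ->]].
apply fold_fixed; auto.
Qed.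

End GS.

Lemma ip_comb (X : InnerSpace) n (x : nat -> R) (F : nat -> X) e :
  ips_ip (sumv n (fun j => ips_scal (x j) (F j))) e = sumR n (fun j => x j * ips_ip (F j) e).
Proof. rewrite ip_sumv_l. apply sumR_ext. intros. apply ips_ipZ. Qed.

Lemma lin_comb (X Y : InnerSpace) (f : X -> Y) n (x : nat -> R) (F : nat -> X) :
  is_linear f ->
  f (sumv n (fun j => ips_scal (x j) (F j))) = sumv n (fun j => ips_scal (x j) (f (F j))).
Proof.
intros Hl. rewrite lin_sumv; auto. apply sumv_ext. intros. destruct Hl as [_ Hs]. apply Hs.
Qed.

Lemma ON_norm (X : InnerSpace) n (b : nat -> X) i : ON n b -> (i < n)%nat -> vnorm (b i) = 1.
Proof. intros H Hi. unfold vnorm. rewrite H; auto. rewrite Nat.eqb_refl. apply sqrt_1. Qed.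

Lemma lin_bounded (X Y : InnerSpace) (f : X -> Y) : is_linear f ->
  exists K, 0 <= K /\ forall v, vnorm (f v) <= K * vnorm v.
Proof.
intros Hl. destruct (basis_exists X) as [n [b [Hon Hb]]].
exists (sumR n (fun i => vnorm (f (b i)))). split.
- rewrite -(sumR_zero n (fun _ => 0)); auto. apply sumR_le. intros; apply vnorm_ge0.
- intros v. rewrite -{1}(Hb v). unfold proj. rewrite lin_comb; auto.
  eapply Rle_trans. apply norm_sumv.
  rewrite Rmult_comm -sumR_scal. apply sumR_le. intros i Hi.
  rewrite vnorm_scal. apply Rmult_le_compat_r. apply vnorm_ge0.
  eapply Rle_trans. apply CS_abs. rewrite (ON_norm X n b i); auto. lra.
Qed.

Lemma inj_surj (X : InnerSpace) (f : X -> X) : is_linear f ->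
  (forall v, f v = ips_zero -> v = ips_zero) -> forall w, exists v, f v = w.
Proof.
intros Hl Hinj w. destruct (basis_exists X) as [n [b [Hon Hb]]].
destruct (linsys n (fun i j => ips_ip (f (b j)) (b i))) with (c := fun i => ips_ip w (b i))
  as [x Hx].
- intros x Hx j Hj.
  set (v := sumv n (fun j => ips_scal (x j) (b j))).
  assert (Hfv : f v = ips_zero).
  { rewrite -(Hb (f v)). unfold proj.
    rewrite (sumv_ext X n _ (fun i => ips_scal 0 (b i))).
    - rewrite sumv_scal scal0. reflexivity.
    - intros i Hi. f_equal. unfold v. rewrite lin_comb; auto. rewrite ip_comb.
      transitivity (sumR n (fun j0 => ips_ip (f (b j0)) (b i) * x j0)); [apply sumR_ext; intros; ring | apply Hx; auto]. }
  apply Hinj in Hfv.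
  assert (E : ips_ip v (b j) = x j).
  { unfold v. rewrite ip_comb.
    rewrite (sumR_ext n _ (fun i => x i * (if Nat.eqb i j then 1 else 0))).
    apply sumR_delta; auto. intros i Hi. rewrite Hon; auto. }
  rewrite -E Hfv ip0l. reflexivity.
- exists (sumv n (fun j => ips_scal (x j) (b j))).
  rewrite -(Hb (f _)) -(Hb w). unfold proj. apply sumv_ext. intros i Hi. f_equal.
  rewrite lin_comb; auto. rewrite ip_comb -(Hx i Hi). apply sumR_ext. intros; ring.
Qed.

Lemma opnorm_exists (X Y : InnerSpace) (f : X -> Y) K : 0 <= K ->
  (forall v, vnorm (f v) <= K * vnorm v) -> exists r, is_opnorm f r /\ r <= K.
Proof.
intros HK Hf.
set (S := fun a => exists v : X, vnorm v <= 1 /\ a = vnorm (f v)).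
assert (Hbd : bound S).
{ exists K. intros a [v [Hv ->]]. eapply Rle_trans. apply Hf.
  pose proof (vnorm_ge0 X v). nra. }
assert (Hne : exists a, S a).
{ exists (vnorm (f ips_zero)), ips_zero. split; auto. rewrite vnorm_zero; lra. }
destruct (completeness S Hbd Hne) as [m Hm].
exists m. split; auto. apply Hm.
intros a [v [Hv ->]]. eapply Rle_trans. apply Hf. pose proof (vnorm_ge0 X v). nra.
Qed.

Lemma opnorm_ge0 (X Y : InnerSpace) (f : X -> Y) r : is_opnorm f r -> 0 <= r.
Proof.
intros [Hub _]. eapply Rle_trans. apply (vnorm_ge0 _ (f ips_zero)).
apply Hub. exists ips_zero. split; auto. rewrite vnorm_zero; lra.
Qed.

Lemma opnorm_bound (X Y : InnerSpace) (f : X -> Y) r :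
  (forall k v, f (ips_scal k v) = ips_scal k (f v)) ->
  is_opnorm f r -> forall v, vnorm (f v) <= r * vnorm v.
Proof.
intros Hs Hr v. pose proof (opnorm_ge0 _ _ _ _ Hr) as Hr0.
destruct (vnorm_ge0 X v) as [Hv|Hv].
- assert (Hu : vnorm (f (ips_scal (/ vnorm v) v)) <= r).
  { apply Hr. exists (ips_scal (/ vnorm v) v). split; auto.
    rewrite vnorm_scal Rabs_right. right; field; lra.
    left; apply Rinv_0_lt_compat; lra. }
  rewrite Hs vnorm_scal Rabs_right in Hu.
  2: left; apply Rinv_0_lt_compat; lra.
  apply Rmult_le_reg_l with (/ vnorm v). apply Rinv_0_lt_compat; lra.
  replace (/ vnorm v * (r * vnorm v)) with r by (field; lra). exact Hu.
- symmetry in Hv. apply vnorm_eq0 in Hv. subst v.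
  rewrite -{1}(scal0 X ips_zero) Hs scal0 !vnorm_zero. lra.
Qed.

Lemma vsub_scal (X : InnerSpace) k (a c : X) : vsub (ips_scal k a) (ips_scal k c) = ips_scal k (vsub a c).
Proof.
unfold vsub. rewrite !opp_scal ips_scalDr !ips_scalA Rmult_comm. reflexivity.
Qed.

Lemma D_hom (X Y Z : InnerSpace) (f1 : X -> Y) (f2 : Z -> Y) (f3 : X -> Z) :
  is_linear f1 -> is_linear f2 -> is_linear f3 ->
  forall k v, vsub (f1 (ips_scal k v)) (f2 (f3 (ips_scal k v))) =
              ips_scal k (vsub (f1 v) (f2 (f3 v))).
Proof.
intros [_ H1] [_ H2] [_ H3] k v. rewrite H1 H3 H2. apply vsub_scal.
Qed.

Lemma D_opnorm (X Y Z : InnerSpace) (f1 : X -> Y) (f2 : Z -> Y) (f3 : X -> Z) :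
  is_linear f1 -> is_linear f2 -> is_linear f3 ->
  exists r, is_opnorm (fun v => vsub (f1 v) (f2 (f3 v))) r.
Proof.
intros H1 H2 H3.
destruct (lin_bounded _ _ _ H1) as [K1 [HK1 B1]].
destruct (lin_bounded _ _ _ H2) as [K2 [HK2 B2]].
destruct (lin_bounded _ _ _ H3) as [K3 [HK3 B3]].
destruct (opnorm_exists _ _ (fun v => vsub (f1 v) (f2 (f3 v))) (K1 + K2 * K3)) as [r [Hr _]].
- nra.
- intros v. eapply Rle_trans. apply vsub_le.
  specialize (B1 v). specialize (B2 (f3 v)). specialize (B3 v).
  pose proof (vnorm_ge0 _ v). nra.
- exists r; auto.
Qed.

Lemma lin_comp (X Y Z : InnerSpace) (f : Y -> Z) (g : X -> Y) :
  is_linear f -> is_linear g -> is_linear (fun v => f (g v)).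
Proof.
intros [Fa Fs] [Ga Gs]. split; intros; [rewrite Ga Fa | rewrite Gs Fs]; reflexivity.
Qed.

Lemma key_lemma (M : Type) (G : Groupoid M) (E : M -> InnerSpace)
  (lam : forall x y : M, Hom G x y -> E x -> E y) :
  (forall (x y : M) (g : Hom G x y), is_linear (lam x y g)) ->
  (forall (x : M) (v : E x), lam x x (gid x) v = v) ->
  forall (b : ereal) (c : R),
    is_esup (b_set E lam) b -> is_lub (c_set E lam) c -> c < 1 ->
  forall (x y : M) (g : Hom G x y),
    0 <= c /\ exists L : E y -> E x, is_inverse (lam x y g) L /\
      exists K, 0 <= K /\ (forall w, vnorm (L w) <= K * vnorm w) /\ ele (EFin K) (ediv b (1 - c)).
Proof.
intros Hlin Hunit b c Hb Hc Hc1 x y g.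
set (gi := ginv g).
(* near-identity on E y *)
destruct (D_opnorm _ _ _ (lam y y (gcomp g gi)) (lam x y g) (lam y x gi)) as [rA HrA]; auto.
assert (HrAc : rA <= c).
{ apply Hc. exists y, x, y, gi, g. exact HrA. }
pose proof (opnorm_ge0 _ _ _ _ HrA) as HrA0.
assert (Hc0 : 0 <= c) by lra.
split; auto.
assert (HA := opnorm_bound _ _ _ _ (D_hom _ _ _ _ _ _ (Hlin _ _ _) (Hlin _ _ _) (Hlin _ _ _)) HrA).
unfold gi in HA. simpl in HA. rewrite (gcompVr M G) in HA.
set (P := fun v => lam x y g (lam y x gi v)).
assert (HP : forall v, (1 - c) * vnorm v <= vnorm (P v)).
{ intros v. specialize (HA v). rewrite Hunit in HA. fold gi in HA.
  pose proof (rev_tri _ v (P v)). pose proof (vnorm_ge0 _ v). unfold P in *. nra. }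
(* near-identity on E x *)
destruct (D_opnorm _ _ _ (lam x x (gcomp gi g)) (lam y x gi) (lam x y g)) as [rB HrB]; auto.
assert (HrBc : rB <= c).
{ apply Hc. exists x, y, x, g, gi. exact HrB. }
pose proof (opnorm_ge0 _ _ _ _ HrB) as HrB0.
assert (HB := opnorm_bound _ _ _ _ (D_hom _ _ _ _ _ _ (Hlin _ _ _) (Hlin _ _ _) (Hlin _ _ _)) HrB).
unfold gi in HB. simpl in HB. rewrite (gcompVl M G) in HB.
set (Q := fun v => lam y x gi (lam x y g v)).
assert (HQ : forall v, (1 - c) * vnorm v <= vnorm (Q v)).
{ intros v. specialize (HB v). rewrite Hunit in HB. fold gi in HB.
  pose proof (rev_tri _ v (Q v)). pose proof (vnorm_ge0 _ v). unfold Q in *. nra. }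
assert (HPl : is_linear P) by (unfold P; apply lin_comp; auto).
assert (HQl : is_linear Q) by (unfold Q; apply lin_comp; auto).
assert (Hsurj : forall w, exists v, P v = w).
{ apply inj_surj; auto. intros v Hv. apply vnorm_eq0.
  specialize (HP v). rewrite Hv vnorm_zero in HP. pose proof (vnorm_ge0 _ v). nra. }
assert (Hginj : forall v1 v2, lam x y g v1 = lam x y g v2 -> v1 = v2).
{ intros v1 v2 H. apply vsub_eq0. apply vnorm_eq0.
  specialize (HQ (vsub v1 v2)). rewrite lin_vsub in HQ; auto.
  unfold Q in HQ. rewrite H vsub_self vnorm_zero in HQ.
  pose proof (vnorm_ge0 _ (vsub v1 v2)). nra. }
set (Pinv := fun w => proj1_sig (constructive_indefinite_description _ (Hsurj w))).
assert (HPinv : forall w, P (Pinv w) = w).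
{ intros w. unfold Pinv. destruct (constructive_indefinite_description _ (Hsurj w)). auto. }
destruct (lin_bounded _ _ _ (Hlin y x gi)) as [K0 [HK00 HK0]].
destruct (opnorm_exists _ _ (lam y x gi) K0 HK00 HK0) as [rgi [Hrgi _]].
pose proof (opnorm_ge0 _ _ _ _ Hrgi) as Hrgi0.
assert (Hgib := opnorm_bound _ _ _ _ (proj2 (Hlin y x gi)) Hrgi).
assert (Hic : 0 < / (1 - c)) by (apply Rinv_0_lt_compat; lra).
exists (fun w => lam y x gi (Pinv w)). split.
- split.
  + intros v. apply Hginj. apply (HPinv (lam x y g v)).
  + intros w. apply HPinv.
- exists (rgi / (1 - c)). split; [|split].
  + unfold Rdiv. apply Rmult_le_pos; lra.
  + intros w. eapply Rle_trans. apply Hgib.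
    specialize (HP (Pinv w)). rewrite HPinv in HP.
    pose proof (vnorm_ge0 _ (Pinv w)).
    assert (H1 : vnorm (Pinv w) <= vnorm w * / (1 - c)).
    { apply Rmult_le_reg_l with (1 - c). lra.
      replace ((1 - c) * (vnorm w * / (1 - c))) with (vnorm w) by (field; lra). exact HP. }
    unfold Rdiv. replace (rgi * / (1 - c) * vnorm w) with (rgi * (vnorm w * / (1 - c))) by ring.
    apply Rmult_le_compat_l; auto.
  + destruct b as [bb|]; simpl; auto.
    simpl in Hb. assert (rgi <= bb) by (apply Hb; exists y, x, gi; exact Hrgi).
    unfold Rdiv. apply Rmult_le_compat_r; lra.
Qed.

Theorem mainTheorem14 :
  forall (M : Type) (G : Groupoid M) (E : M -> InnerSpace)
         (lam : forall x y : M, Hom G x y -> E x -> E y),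
    (* pseudo-representation: each lam_g is linear *)
    (forall (x y : M) (g : Hom G x y), is_linear (lam x y g)) ->
    (* unital *)
    (forall (x : M) (v : E x), lam x x (gid x) v = v) ->
    forall (b : ereal) (c : R),
      is_esup (b_set E lam) b ->
      is_lub (c_set E lam) c ->
      c < 1 ->
      (forall (x y : M) (g : Hom G x y),
          exists L : E y -> E x, is_inverse (lam x y g) L /\
            exists r, is_opnorm L r /\ ele (EFin r) (ediv b (1 - c)))
      /\
      (forall (x y z : M) (g : Hom G x y) (h : Hom G x z) (Lh : E z -> E x),
          is_inverse (lam x z h) Lh ->
          exists r, is_opnorm (DeltaL E lam g h Lh) r /\
            ele (EFin r) (emul (EFin c) (ediv b (1 - c)))).
Proof.
intros M G E lam Hlin Hunit b c Hb Hc Hc1.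
pose proof (key_lemma M G E lam Hlin Hunit b c Hb Hc Hc1) as Key.
split.
- intros x y g. destruct (Key x y g) as [Hc0 [L [HL [K [HK0 [HK Hele]]]]]].
  exists L. split; auto.
  destruct (opnorm_exists _ _ L K HK0 HK) as [r [Hr HrK]].
  exists r. split; auto.
  destruct b as [bb|]; simpl in *; auto. lra.
- intros x y z g h Lh [HLh1 HLh2].
  destruct (Key x z h) as [Hc0 [L [[HL1 HL2] [K [HK0 [HK Hele]]]]]].
  assert (HLL : forall w, Lh w = L w).
  { intros w. rewrite -{2}(HLh2 w). rewrite HL1. reflexivity. }
  set (g1 := gcomp g (ginv h)).
  destruct (D_opnorm _ _ _ (lam x y (gcomp g1 h)) (lam z y g1) (lam x z h)) as [rD HrD]; auto.
  assert (HrDc : rD <= c).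
  { apply Hc. exists x, z, y, h, g1. exact HrD. }
  assert (HD := opnorm_bound _ _ _ _ (D_hom _ _ _ _ _ _ (Hlin _ _ _) (Hlin _ _ _) (Hlin _ _ _)) HrD).
  assert (Hg1 : gcomp g1 h = g).
  { unfold g1. rewrite -gcompA gcompVl gcomp1r. reflexivity. }
  rewrite Hg1 in HD. simpl in HD.
  assert (HDel : forall w, vnorm (DeltaL E lam g h Lh w) <= (c * K) * vnorm w).
  { intros w. unfold DeltaL. fold g1.
    rewrite -{2}(HLh2 w).
    eapply Rle_trans. apply HD. pose proof (opnorm_ge0 _ _ _ _ HrD).
    pose proof (vnorm_ge0 _ (Lh w)). pose proof (vnorm_ge0 _ w).
    rewrite HLL. rewrite HLL in H0. specialize (HK w). nra. }
  destruct (opnorm_exists _ _ _ (c * K) ltac:(nra) HDel) as [r [Hr HrK]].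
  exists r. split; auto.
  destruct b as [bb|]; simpl in *.
  + nra.
  + destruct (Req_EM_T c 0) as [->|Hne]; simpl; auto. lra.
Qed.
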